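(* Consider stochastic ORBCD as described in the context with $\eta_t = \sqrt{t} + L$, where $L=\max_jL_j$, with $i_t$ and $j_t$ sampled independently and uniformly from $\{1,\dots,I\}$ and $\{1,\dots,J\}$ respectively, and let $\bar{\mathbf{x}}^T = \frac{1}{T}\sum_{t=1}^T \mathbf{x}^t$. Suppose the block-wise Lipschitz assumption and the boundedness assumption hold. Then for every $\mathbf{x}\in\mathbb{R}^n$, \[ \mathbb{E}_{\xi}[f(\bar{\mathbf{x}}^T) + g(\bar{\mathbf{x}}^T)] - [f(\mathbf{x}) + g(\mathbf{x})] \le \frac{J\big( \frac{\sqrt{T} + L}{2}D^2 + \sqrt{T}R_f^2 + g(\mathbf{x}^1) - g(\mathbf{x}^* )\big)}{T}. \]
   Context: Problem: minimize $f(\mathbf{x})+g(\mathbf{x})$ with $f=\frac1I\sum_{i=1}^I f_i$, each $f_i:\mathbb{R}^n\to\mathbb{R}$ convex and differentiable, and $g(\mathbf{x})=\sum_{j=1}^J g_j(\mathbf{x}_j)$ with each $g_j$ convex; the minimum is attained at $\mathbf{x}^*$. Here $\mathbf{x}$ is partitioned into $J$ non-overlapping blocks $\mathbf{x}_j\in\mathbb{R}^{n_j}$, $U_j\in\mathbb{R}^{n\times n_j}$ are the corresponding columns of an $n\times n$ permutation matrix, $\mathbf{x}=\sum_jU_j\mathbf{x}_j$, $\mathbf{x}_j=U_j^T\mathbf{x}$, $\nabla_j f=U_j^T\nabla f$. ORBCD (stochastic): $\mathbf{x}^1=\mathbf{0}$; at iteration $t$, pick $i_t$ and $j_t$, set $\mathbf{x}_{j_t}^{t+1}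 = \arg\min_{\mathbf{x}_{j_t}} \langle \nabla_{j_t} f_{i_t}(\mathbf{x}^t), \mathbf{x}_{j_t}\rangle + g_{j_t}(\mathbf{x}_{j_t}) + \frac{\eta_t}{2}\|\mathbf{x}_{j_t}-\mathbf{x}^t_{j_t}\|_2^2$ and $\mathbf{x}^{t+1} = \mathbf{x}^t + U_{j_t}(\mathbf{x}^{t+1}_{j_t}-\mathbf{x}^t_{j_t})$. $\xi=\{(i_1,j_1),\dots,(i_{t-1},j_{t-1})\}$ denotes the history of random choices. Block-wise Lipschitz assumption: $\|\nabla_j f_i(\mathbf{x}+U_jh_j)-\nabla_j f_i(\mathbf{x})\|_2\le L_j\|h_j\|_2\le L\|h_j\|_2$ for all $i,j,\mathbf{x},h_j$, $L=\max_jL_j$. Boundedness assumption: $\|\nabla f_i(\mathbf{x}^t)\|_2\le R_f$ for all $i,t$, and all iterates lie in a set $\mathcal{X}$ of diameter $D$. *)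

(* Defs.v *)
From HB Require Import structures.
From mathcomp Require Import all_boot all_order all_algebra.
From mathcomp Require Import all_classical all_reals all_analysis.
Unset Printing Implicit Defensive.
Import Order.TTheory GRing.Theory Num.Theory.
Import numFieldNormedType.Exports.
Local Open Scope ring_scope.

Section ORBCD.
Variable R : realType.
Variables (n J : nat) (blk : 'I_n -> 'I_J).
(* blk k = the block containing coordinate k; blocks are non-overlapping. *)

(* index set of block j; R^{n_j} is represented as functions blockT j -> R *)
Definition blockT (j : 'I_J) := {k : 'I_n | blk k == j}.
Definition bvec (j : 'I_J) := blockT j -> R.

Definition restr (x : 'rV[R]_n) (j : 'I_J) : bvec j := fun k => x ord0 (val k).
Definition ext (j : 'I_J) (h : bvec j) : 'rV[R]_n :=
  \row_k oapp h 0 (insub k : option (blockT j)).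

Definition norm2 (v : 'rV[R]_n) : R := Num.sqrt (\sum_k v ord0 k ^+ 2).
Definition bnorm2 (j : 'I_J) (h : bvec j) : R := Num.sqrt (\sum_(k : blockT j) h k ^+ 2).
Definition bdot (j : 'I_J) (u v : bvec j) : R := \sum_(k : blockT j) u k * v k.

Definition grad (F : 'rV[R]_n -> R) (x : 'rV[R]_n) : 'rV[R]_n :=
  \row_k ('d F x) (delta_mx ord0 k).
Definition bgrad (F : 'rV[R]_n -> R) (x : 'rV[R]_n) (j : 'I_J) : bvec j :=
  restr (grad F x) j.

Definition convex_fun (F : 'rV[R]_n -> R) : Prop :=
  forall (a b : 'rV[R]_n) (t : R), 0 <= t <= 1 ->
    F (t *: a + (1 - t) *: b) <= t * F a + (1 - t) * F b.
Definition convex_bfun (j : 'I_J) (G : bvec j -> R) : Prop :=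
  forall (a b : bvec j) (t : R), 0 <= t <= 1 ->
    G (fun k => t * a k + (1 - t) * b k) <= t * G a + (1 - t) * G b.

Definition gsum (gj : forall j : 'I_J, bvec j -> R) (x : 'rV[R]_n) : R :=
  \sum_j gj j (restr x j).

Definition eta (L : R) (t : nat) : R := Num.sqrt (t%:R) + L.

Definition orbcd_step (L : R) (gj : forall j : 'I_J, bvec j -> R)
    (F : 'rV[R]_n -> R) (t : nat) (j : 'I_J) (x x' : 'rV[R]_n) : Prop :=
  (forall k, blk k != j -> x' ord0 k = x ord0 k) /\
  let obj := fun y : bvec j =>
    bdot j (bgrad F x j) y + gj j y
    + eta L t / 2 * bnorm2 j (fun k => y k - restr x j k) ^+ 2 in
  forall y : bvec j, obj (restr x' j) <= obj y.

(* Iterates driven by a sequence of choices c : c k = (i_{k+1}, j_{k+1}).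
   iterates step c k = x^{k+1}; in particular iterates step c 0 = x^1 = 0. *)
Variable I : nat.
Fixpoint iterates (step : nat -> 'I_I -> 'I_J -> 'rV[R]_n -> 'rV[R]_n)
    (c : nat -> 'I_I * 'I_J) (k : nat) : 'rV[R]_n :=
  match k with
  | 0 => 0
  | k'.+1 => step k (c k').1 (c k').2 (iterates step c k')
  end.

Definition xbar step (c : nat -> 'I_I * 'I_J) (T : nat) : 'rV[R]_n :=
  (T%:R)^-1 *: \sum_(k < T) iterates step c k.

End ORBCD.

(* Expectation over the history xi of T independent uniform choices in the
   finite set A (here A = 'I_I * 'I_J); d is an (irrelevant) default value used
   to extend a length-T history to an infinite sequence. *)
Definition Exp (R : realType) (A : finType) (d : A) (T : nat)
    (Fx : (nat -> A) -> R) : R :=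
  ((#|A|%:R : R) ^+ T)^-1 * \sum_(s : T.-tuple A) Fx (fun k => nth d s k).

(* Main.v *)
Require Import Defs.
From HB Require Import structures.
From mathcomp Require Import all_boot all_order all_algebra.
From mathcomp Require Import all_classical all_reals all_analysis.
Import Order.TTheory GRing.Theory Num.Theory.
Import numFieldNormedType.Exports.
Local Open Scope ring_scope.
From mathcomp Require Import ring lra.

Section Helpers.
Local Open Scope classical_set_scope.
Set Implicit Arguments. Unset Strict Implicit.

Definition nrm2 (R : realType) (n : nat) (v : 'rV[R]_n) : R := \sum_k v ord0 k ^+ 2.
Definition dotv (R : realType) (n : nat) (u v : 'rV[R]_n) : R := \sum_k u ord0 k * v ord0 k.

Lemma nrm2_ge0 (R : realType) n (v : 'rV[R]_n) : 0 <= nrm2 v.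
Proof. by apply: sumr_ge0 => k _; exact: sqr_ge0. Qed.

Lemma norm2_sq (R : realType) n (v : 'rV[R]_n) : norm2 R n v ^+ 2 = nrm2 v.
Proof. by rewrite /norm2 sqr_sqrtr // nrm2_ge0. Qed.

Lemma norm2_ge0 (R : realType) n (v : 'rV[R]_n) : 0 <= norm2 R n v.
Proof. exact: sqrtr_ge0. Qed.

Lemma bnorm2_sq (R : realType) n J blk j (h : bvec R n J blk j) :
  bnorm2 R n J blk j h ^+ 2 = \sum_k h k ^+ 2.
Proof. by rewrite /bnorm2 sqr_sqrtr //; apply: sumr_ge0 => k _; exact: sqr_ge0. Qed.

Lemma sq_le_of_norm (R : realType) n (v : 'rV[R]_n) (B : R) : norm2 R n v <= B -> nrm2 v <= B ^+ 2.
Proof.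
move=> h; rewrite -norm2_sq; have := norm2_ge0 v; nra.
Qed.

Lemma sum_block (R : realType) (n J : nat) (blk : 'I_n -> 'I_J) (j : 'I_J) (h : 'I_n -> R) :
  \sum_(k : blockT n J blk j) h (val k) = \sum_(k | blk k == j) h k.
Proof.
rewrite [RHS](reindex_omap (val : blockT n J blk j -> 'I_n) insub); last first.
  by move=> i Pi; rewrite insubT.
apply: eq_bigl => x; rewrite valK eqxx andbT; by case: x.
Qed.

Lemma sum_blocks (R : realType) (n J : nat) (blk : 'I_n -> 'I_J) (h : 'I_n -> R) :
  \sum_(j : 'I_J) \sum_(k : blockT n J blk j) h (val k) = \sum_k h k.
Proof.
under eq_bigr do rewrite sum_block.
by rewrite [RHS](partition_big blk predT).
Qed.

Lemma at_right_sub (R : realType) (q : R -> R) (l : R) :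
  q @ 0^' --> l -> q @ 0^'+ --> l.
Proof.
move=> H A /H /nbhs_ballP [_ /posnumP[e] xe_A].
by exists e%:num => //= y xe_y; rewrite lt_def => /andP [xney _]; apply: xe_A.
Qed.

Lemma first_order0 (R : realType) (n : nat) (F : 'rV[R]_n -> R) (z y : 'rV[R]_n) :
  convex_fun R n F -> differentiable F z -> F z + 'd F z (y - z) <= F y.
Proof.
move=> cF dF.
have := @diff_derivable _ _ _ F z (y - z) dF. rewrite /derivable => cv.
have := @deriveE _ _ _ F z (y - z) dF => <-.
rewrite /derive.
suff : lim ((fun h : R => h^-1 *: ((F \o shift z) (h *: (y - z)) - F z)) @ 0^') <= F y - F z by lra.
apply: (@cvgr_to_le _ (0:R)^'+ _ R).
  apply: at_right_sub. exact: cv.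
near=> h.
have h0 : 0 < h by near: h; exact: nbhs_right_gt.
have h1 : h <= 1 by near: h; apply: nbhs_right_ltW; exact: ltr01.
rewrite /= /shift.
have := cF y z h; rewrite h1 ltW //= => /(_ isT).
have -> : h *: y + (1 - h) *: z = h *: (y - z) + z.
  by rewrite scalerBr scalerBl scale1r addrCA addrC.
move=> Hc.
rewrite ler_pdivrMl // -subr_ge0; rewrite -subr_ge0 in Hc.
have -> : h * (F y - F z) - (F (h *: (y - z) + z) - F z) = h * F y + (1 - h) * F z - F (h *: (y - z) + z) by ring.
exact: Hc.
Unshelve. all: by end_near.
Qed.

Lemma diff_grad (R : realType) (n : nat) (F : 'rV[R]_n -> R) (z v : 'rV[R]_n) :
  'd F z v = \sum_k v ord0 k * grad R n F z ord0 k.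
Proof.
rewrite {1}[v]matrix_sum_delta big_ord1 linear_sum; apply: eq_bigr => k _.
by rewrite linearZ /= /grad mxE.
Qed.

Lemma first_order (R : realType) (n : nat) (F : 'rV[R]_n -> R) (z y : 'rV[R]_n) :
  convex_fun R n F -> differentiable F z -> F z + dotv (grad R n F z) (y - z) <= F y.
Proof.
move=> cF dF; have := first_order0 y cF dF; rewrite diff_grad /dotv.
by under eq_bigr do rewrite mulrC.
Qed.

Lemma dot_lb (R : realType) n (u w : 'rV[R]_n) (e : R) : 0 < e ->
  - (nrm2 u / (2 * e) + e / 2 * nrm2 w) <= dotv u w.
Proof.
move=> e0; rewrite /nrm2 /dotv mulr_suml mulr_sumr -big_split -sumrN /=.
apply: ler_sum => k _.
rewrite -subr_ge0.
have -> : u ord0 k * w ord0 k - - (u ord0 k ^+ 2 / (2 * e) + e / 2 * w ord0 k ^+ 2)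
   = (u ord0 k + e * w ord0 k) ^+ 2 / (2 * e).
  by field; lra.
by apply: divr_ge0; [exact: sqr_ge0| lra].
Qed.
Lemma small_s (R : realType) (a b : R) :
  0 <= b -> (forall s : R, 0 < s -> s <= 1 -> 0 <= s * a + s ^+ 2 * b) -> 0 <= a.
Proof.
move=> b0 H; rewrite leNgt; apply/negP => a0.
have ba : 0 < b - a by lra.
set s := - a / (b - a).
have s0 : 0 < s by rewrite /s divr_gt0 // oppr_gt0.
have s1 : s <= 1 by rewrite /s ler_pdivrMr // mul1r; lra.
have := H s s0 s1.
have -> : s * a + s ^+ 2 * b = s * (- (a ^+ 2) / (b - a)).
  rewrite /s; field; lra.
rewrite pmulr_rge0 //.
have : - (a ^+ 2) / (b - a) < 0 by rewrite ltr_pdivrMr // mul0r; nra.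
lra.
Qed.
Lemma three_point (R : realType) (K : finType) (G : (K -> R) -> R)
  (Gc : forall (a b : K -> R) (t : R), 0 <= t <= 1 ->
          G (fun k => t * a k + (1 - t) * b k) <= t * G a + (1 - t) * G b)
  (u p q y : K -> R) (eta : R) (eta0 : 0 < eta)
  (Hmin : forall w : K -> R,
     \sum_k (u k * p k + eta / 2 * (p k - q k) ^+ 2) + G p
       <= \sum_k (u k * w k + eta / 2 * (w k - q k) ^+ 2) + G w) :
  \sum_k u k * (q k - y k) + G p - G y
    <= \sum_k (eta / 2 * ((y k - q k) ^+ 2 - (y k - p k) ^+ 2) + u k ^+ 2 / (2 * eta)).
Proof.
set A := \sum_k (u k * (y k - p k) + eta * (p k - q k) * (y k - p k)).
set B := \sum_k (eta / 2 * (y k - p k) ^+ 2).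
have B0 : 0 <= B by apply: sumr_ge0 => k _; apply: mulr_ge0; [lra| exact: sqr_ge0].
have Ha : 0 <= A + G y - G p.
  apply: (@small_s R _ B B0) => s s0 s1.
  have Hm := Hmin (fun k => s * y k + (1 - s) * p k).
  have st : 0 <= s <= 1 by rewrite (ltW s0) s1.
  have Hg := Gc y p s st.
  have E : \sum_k (u k * (s * y k + (1 - s) * p k) + eta / 2 * ((s * y k + (1 - s) * p k) - q k) ^+ 2)
      - \sum_k (u k * p k + eta / 2 * (p k - q k) ^+ 2) = s * A + s ^+ 2 * B.
    rewrite -sumrB /A /B !mulr_sumr -big_split; apply: eq_bigr => k _ /=; by field.
  nra.
have HH : \sum_k u k * (q k - y k) + A
    <= \sum_k (eta / 2 * ((y k - q k) ^+ 2 - (y k - p k) ^+ 2) + u k ^+ 2 / (2 * eta)).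
rewrite /A -big_split /=; apply: ler_sum => k _.
have e2 : 0 < 2 * eta by lra.
rewrite -subr_ge0.
have -> : eta / 2 * ((y k - q k) ^+ 2 - (y k - p k) ^+ 2) + u k ^+ 2 / (2 * eta) -
   (u k * (q k - y k) + (u k * (y k - p k) + eta * (p k - q k) * (y k - p k)))
   = (u k - eta * (q k - p k)) ^+ 2 / (2 * eta).
  by field; lra.
  by apply: divr_ge0; [exact: sqr_ge0| lra].
lra.
Qed.
Definition upd (A : finType) (T : nat) (s : T.-tuple A) (i0 : 'I_T) (a : A) : T.-tuple A :=
  [tuple (if i == i0 then a else tnth s i) | i < T].

Lemma upd_pos (A : finType) T s i0 a : tnth (@upd A T s i0 a) i0 = a.
Proof. by rewrite tnth_mktuple eqxx. Qed.

Lemma upd_upd (A : finType) T s i0 a b : @upd A T (upd s i0 a) i0 b = upd s i0 b.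
Proof. by apply: eq_from_tnth => i; rewrite !tnth_mktuple; case: eqP. Qed.

Lemma upd_id (A : finType) T s i0 : @upd A T s i0 (tnth s i0) = s.
Proof. by apply: eq_from_tnth => i; rewrite !tnth_mktuple; case: eqP => // ->. Qed.

Lemma upd_eq (A : finType) T s i0 a : (@upd A T s i0 a == s) = (tnth s i0 == a).
Proof.
apply/eqP/eqP => [<-|<-]; first by rewrite upd_pos.
exact: upd_id.
Qed.

Lemma avg_tuple (R : realType) (A : finType) (T : nat) (i0 : 'I_T) (H : T.-tuple A -> R) :
  #|A|%:R * \sum_(s : T.-tuple A) H s = \sum_(s : T.-tuple A) \sum_(a : A) H (upd s i0 a).
Proof.
rewrite exchange_big /=.
have E : forall a, \sum_(s : T.-tuple A) H (upd s i0 a) = #|A|%:R * \sum_(s | tnth s i0 == a) H s.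
  move=> a.
  rewrite (partition_big (fun s : T.-tuple A => tnth s i0) predT) //=.
  rewrite -sum1_card natr_sum mulr_suml; apply: eq_bigr => b _; rewrite mul1r.
  rewrite [in RHS](reindex_onto (fun s => upd s i0 a) (fun s => upd s i0 b)) /=; last first.
    by move=> s /eqP <-; rewrite upd_upd upd_id.
  apply: eq_bigl => s; rewrite upd_pos eqxx /= upd_upd upd_eq //.
rewrite [RHS](eq_bigr _ (fun a _ => E a)).
rewrite -mulr_sumr; congr (_ * _).
by rewrite (partition_big (fun s : T.-tuple A => tnth s i0) predT).
Qed.
Local Close Scope classical_set_scope.

Lemma nth_upd (A : finType) T (s : T.-tuple A) (i0 : 'I_T) a d k :
  nth d (upd s i0 a) k = if k == val i0 then a else nth d s k.
Proof.
case: (ltnP k T) => hk.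
  have -> : k = val (Ordinal hk) by [].
  by rewrite -!tnth_nth tnth_mktuple.
have -> : (k == val i0) = false by apply/negbTE; rewrite neq_ltn (leq_trans (ltn_ord i0) hk) orbT.
by rewrite !nth_default ?size_tuple.
Qed.

Lemma iter_agree (R : realType) n J I step (c c' : nat -> 'I_I * 'I_J) t :
  (forall k, (k < t)%N -> c k = c' k) ->
  forall k, (k <= t)%N -> iterates R n J I step c k = iterates R n J I step c' k.
Proof.
move=> H; elim=> [|k IH] hk //=.
by rewrite H // IH // ltnW.
Qed.

Lemma gdiff (R : realType) n J blk (gj : forall j : 'I_J, bvec R n J blk j -> R) (z z' : 'rV[R]_n) j :
  (forall k, blk k != j -> z' ord0 k = z ord0 k) ->
  gsum R n J blk gj z' - gsum R n J blk gj z = gj j (restr R n J blk z' j) - gj j (restr R n J blk z j).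
Proof.
move=> H; rewrite /gsum -sumrB (bigD1 j) //= big1 ?addr0 // => j' hj'.
have -> : restr R n J blk z' j' = restr R n J blk z j'.
  apply: funext => kb; rewrite /restr H //.
  by case: kb => k hk /=; rewrite (eqP hk).
by rewrite subrr.
Qed.

Lemma blockdiff (R : realType) n J blk (z z' x : 'rV[R]_n) j :
  (forall k, blk k != j -> z' ord0 k = z ord0 k) ->
  \sum_(kb : blockT n J blk j) ((restr R n J blk x j kb - restr R n J blk z j kb) ^+ 2
     - (restr R n J blk x j kb - restr R n J blk z' j kb) ^+ 2)
  = nrm2 (x - z) - nrm2 (x - z').
Proof.
move=> H.
rewrite (@sum_block _ _ _ blk j (fun k => (x ord0 k - z ord0 k) ^+ 2 - (x ord0 k - z' ord0 k) ^+ 2)).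
rewrite /nrm2 -sumrB big_mkcond /=; apply: eq_bigr => k _; rewrite !mxE.
case: eqP => // /eqP hk; by rewrite H // subrr.
Qed.

Lemma blocksq (R : realType) n J blk (v : 'rV[R]_n) j :
  \sum_(kb : blockT n J blk j) (restr R n J blk v j kb) ^+ 2 <= nrm2 v.
Proof.
rewrite (@sum_block _ _ _ blk j (fun k => v ord0 k ^+ 2)) /nrm2 big_mkcond /=; apply: ler_sum => k _.
by case: ifP => // _; exact: sqr_ge0.
Qed.

Lemma obj_form (R : realType) (K : finType) (u p q : K -> R) (G : R) (e : R) :
  \sum_k u k * p k + G + e / 2 * (Num.sqrt (\sum_k (p k - q k) ^+ 2)) ^+ 2
  = \sum_k (u k * p k + e / 2 * (p k - q k) ^+ 2) + G.
Proof.
rewrite sqr_sqrtr; last by apply: sumr_ge0 => k _; exact: sqr_ge0.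
by rewrite big_split /= -mulr_sumr; lra.
Qed.

Lemma per_step (R : realType) (n I J : nat) (blk : 'I_n -> 'I_J)
  (fi : 'I_I -> 'rV[R]_n -> R)
  (gj : forall j : 'I_J, bvec R n J blk j -> R)
  (fi_convex : forall i, @convex_fun R n (fi i))
  (fi_diff : forall i (x : 'rV[R]_n), differentiable (fi i) x)
  (gj_convex : forall j, @convex_bfun R n J blk j (gj j))
  (xstar z : 'rV[R]_n) (Rf Lm : R) (t : nat)
  (eta0 : 0 < Defs.eta R Lm t) (I0 : (0 < I)%N) (J0 : (0 < J)%N)
  (Hz : forall i, norm2 R n (grad R n (fi i) z) <= Rf)
  (z' : 'I_I -> 'I_J -> 'rV[R]_n)
  (Hs : forall i j, orbcd_step R n J blk Lm gj (fi i) t j z (z' i j))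
  (f : 'rV[R]_n -> R) (hf : f = fun y => (I%:R)^-1 * \sum_i fi i y)
  (g : 'rV[R]_n -> R) (hg : g = gsum R n J blk gj)
  (e : R) (he : e = Defs.eta R Lm t) :
  \sum_(a : 'I_I * 'I_J) ((J%:R)^-1 * (f z + g z - (f xstar + g xstar)) + g (z' a.1 a.2) - g z
     - e / 2 * (nrm2 (xstar - z) - nrm2 (xstar - z' a.1 a.2)) - Rf ^+ 2 / (2 * e)) <= 0.
Proof.
have e2 : 0 < 2 * e by rewrite he; lra.
have e0 : 0 < e by rewrite he.
pose Q i j := \sum_(kb : blockT n J blk j) bgrad R n J blk (fi i) z j kb
                 * (restr R n J blk z j kb - restr R n J blk xstar j kb).
have key : forall i j,
  Q i j + gj j (restr R n J blk z j) - gj j (restr R n J blk xstar j) + (g (z' i j) - g z)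
   <= e / 2 * (nrm2 (xstar - z) - nrm2 (xstar - z' i j)) + Rf ^+ 2 / (2 * e).
  move=> i j; have [H1 H2] := Hs i j.
  set u := bgrad R n J blk (fi i) z j.
  set p := restr R n J blk (z' i j) j.
  set q := restr R n J blk z j.
  set y := restr R n J blk xstar j.
  have TP := @three_point R (blockT n J blk j) (gj j) (gj_convex j) u p q y e e0.
  have Hmin : forall w : blockT n J blk j -> R,
     \sum_k (u k * p k + e / 2 * (p k - q k) ^+ 2) + gj j p
       <= \sum_k (u k * w k + e / 2 * (w k - q k) ^+ 2) + gj j w.
    move=> w; have := H2 w; rewrite /bdot /bnorm2 -he -/u -/p -/q.
    by rewrite !obj_form.
  have {}TP := TP Hmin.
  have Eg : g (z' i j) - g z = gj j p - gj j q by rewrite hg (@gdiff _ _ _ _ _ _ _ j H1).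
  rewrite big_split /= -mulr_sumr -mulr_suml in TP.
  have Eb : \sum_(kb : blockT n J blk j) ((y kb - q kb) ^+ 2 - (y kb - p kb) ^+ 2)
     = nrm2 (xstar - z) - nrm2 (xstar - z' i j) by rewrite blockdiff.
  have Eu : \sum_(kb : blockT n J blk j) u kb ^+ 2 <= Rf ^+ 2.
    apply: (le_trans (@blocksq R n J blk (grad R n (fi i) z) j)); apply: sq_le_of_norm; exact: Hz.
  have Eu2 : (\sum_(kb : blockT n J blk j) u kb ^+ 2) / (2 * e) <= Rf ^+ 2 / (2 * e).
    by rewrite ler_pM2r // invr_gt0.
  have EQ : Q i j = \sum_kb u kb * (q kb - y kb) by [].
  rewrite Eb in TP; rewrite Eg EQ; lra.
set C := f z + g z - (f xstar + g xstar).
pose W (a : 'I_I * 'I_J) := (J%:R)^-1 * C - (Q a.1 a.2 + (gj a.2 (restr R n J blk z a.2) - gj a.2 (restr R n J blk xstar a.2))).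
apply: (@le_trans _ _ (\sum_a W a)).
  apply: ler_sum => a _; have := key a.1 a.2; rewrite /W; lra.
rewrite /W sumrB sumr_const card_prod !card_ord.
rewrite -(pair_bigA _ (fun i j => Q i j + (gj j (restr R n J blk z j) - gj j (restr R n J blk xstar j)))) /=.
under eq_bigr do rewrite big_split /=.
rewrite big_split /=.
have HQ : forall i, fi i z - fi i xstar <= \sum_j Q i j.
  move=> i; have := first_order xstar (fi_convex i) (fi_diff i z).
  have -> : \sum_j Q i j = - dotv (grad R n (fi i) z) (xstar - z).
    rewrite /Q /dotv -sumrN.
    rewrite (@sum_blocks R n J blk (fun k => grad R n (fi i) z ord0 k * (z ord0 k - xstar ord0 k))).
    by apply: eq_bigr => k _; rewrite !mxE; ring.
  lra.
have HG : \sum_(i < I) \sum_(j < J) (gj j (restr R n J blk z j) - gj j (restr R n J blk xstar j)) = I%:R * (g z - g xstar).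
  by rewrite hg /gsum sumrB sumr_const card_ord mulr_natl.
have Hf : I%:R * f z - I%:R * f xstar = \sum_i (fi i z - fi i xstar).
  have I0' : (I%:R : R) != 0 by rewrite pnatr_eq0 -lt0n.
  by rewrite hf /= !mulrA divff // !mul1r sumrB.
have HQs : \sum_i (fi i z - fi i xstar) <= \sum_i \sum_j Q i j by apply: ler_sum => i _; exact: HQ i.
have EC : (J%:R)^-1 * C *+ (I * J) = I%:R * C.
  have J0' : (J%:R : R) != 0 by rewrite pnatr_eq0 -lt0n.
  rewrite -mulr_natr natrM. field. done.
rewrite EC HG.
rewrite /C; lra.
Qed.

Lemma tele_ineq (R : realType) (e d : nat -> R) (M : R) (T : nat) :
  (0 < T)%N -> (forall t, 0 <= e t) -> (forall t, e t <= e t.+1) -> (forall t, d t <= M) ->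
  \sum_(t < T) e t.+1 * (d t - d t.+1) <= e T * M - e T * d T.
Proof.
move=> T0 e0 em dM; elim: T T0 => // T IH _.
rewrite big_ord_recr /=.
case: T IH => [|T] IH.
  rewrite big_ord0 add0r; have := dM 0%N; have := e0 1%N; nra.
have {}IH := IH isT.
have := em T.+1; have := dM T.+1; have := e0 T.+1; nra.
Qed.

Lemma step_aux (R : realType) (a b : R) : 0 < a -> 0 < b -> a <= b -> b ^+ 2 - a ^+ 2 = 1 ->
  (2 * b)^-1 + (2 * b)^-1 - (2 * a)^-1 <= b - a.
Proof.
move=> ap b0 hab h.
have -> : (2 * b)^-1 + (2 * b)^-1 - (2 * a)^-1 = (2 * a - b) / (2 * a * b) by field; lra.
rewrite ler_pdivrMr; last by apply: mulr_gt0 => //; lra.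
have e1 : (b - a) * (a + b) = 1 by rewrite -h; ring.
have -> : 2 * a - b = (2 * a - b) * ((b - a) * (a + b)) by rewrite e1 mulr1.
have hb : 0 <= b + 2 * a by lra.
have H := mulr_ge0 (sqr_ge0 (b - a)) hb.
rewrite -subr_ge0.
have -> : (b - a) * (2 * a * b) - (2 * a - b) * ((b - a) * (a + b)) = (b - a) ^+ 2 * (b + 2 * a) by ring.
exact: H.
Qed.

Lemma sqrt_sum (R : realType) (T : nat) : (0 < T)%N ->
  \sum_(t < T) (2 * Num.sqrt (t.+1%:R))^-1 + (2 * Num.sqrt (T%:R : R))^-1 <= Num.sqrt (T%:R).
Proof.
elim: T => // T IH _.
rewrite big_ord_recr /=.
case: T IH => [|T] IH.
  rewrite big_ord0 add0r sqrtr1.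
  have -> : (2 * 1 : R)^-1 + (2 * 1)^-1 = 1 by field.
  by [].
have {}IH := IH isT.
have h1 : 0 < Num.sqrt (T.+1%:R : R) by rewrite sqrtr_gt0 ltr0n.
have h2 : 0 < Num.sqrt (T.+2%:R : R) by rewrite sqrtr_gt0 ltr0n.
have h3 : Num.sqrt (T.+1%:R : R) <= Num.sqrt (T.+2%:R) by rewrite ler_sqrt ?ler0n // ler_nat.
have h4 : Num.sqrt (T.+2%:R : R) ^+ 2 - Num.sqrt (T.+1%:R) ^+ 2 = 1.
  by rewrite !sqr_sqrtr ?ler0n // -natrB // subSnn.
have := step_aux h1 h2 h3 h4; lra.
Qed.

Lemma jensen (R : realType) n (Fc : 'rV[R]_n -> R) (cF : convex_fun R n Fc) (X : nat -> 'rV[R]_n) (T : nat) :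
  (0 < T)%N -> Fc ((T%:R)^-1 *: \sum_(k < T) X k) <= (T%:R)^-1 * \sum_(k < T) Fc (X k).
Proof.
elim: T => // T IH _.
case: T IH => [|T] IH.
  by rewrite !big_ord1 invr1 scale1r mul1r.
have {}IH := IH isT.
rewrite big_ord_recr [X in _ <= _ * X]big_ord_recr /=.
set m := T.+1.
set t : R := (m.+1%:R)^-1.
have m0 : (m%:R : R) != 0 by rewrite pnatr_eq0.
have m10 : (m.+1%:R : R) != 0 by rewrite pnatr_eq0.
have ct : (1 - t) * (m%:R)^-1 = t.
  rewrite /t; field; by rewrite m0 andbT addrC natr1.
have t01 : 0 <= t <= 1.
  rewrite /t invr_ge0 ler0n /= invf_le1 ?ltr0n // ler1n //.
have -> : t *: (\sum_(i < m) X i + X m) = t *: X m + (1 - t) *: ((m%:R)^-1 *: \sum_(i < m) X i).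
  by rewrite scalerA ct scalerDr addrC.
apply: (le_trans (cF _ _ _ t01)).
rewrite mulrDr addrC lerD2r.
have h1t : 0 <= 1 - t by lra.
apply: (le_trans (ler_wpM2l h1t IH)).
by rewrite mulrA ct.
Qed.

Lemma convexF (R : realType) (n I J : nat) (blk : 'I_n -> 'I_J)
  (fi : 'I_I -> 'rV[R]_n -> R)
  (gj : forall j : 'I_J, bvec R n J blk j -> R)
  (fi_convex : forall i, @convex_fun R n (fi i))
  (gj_convex : forall j, @convex_bfun R n J blk j (gj j)) :
  convex_fun R n (fun y => (I%:R)^-1 * \sum_i fi i y + gsum R n J blk gj y).
Proof.
move=> a b t ht.
have h1 : (I%:R)^-1 * \sum_i fi i (t *: a + (1 - t) *: b)
   <= t * ((I%:R)^-1 * \sum_i fi i a) + (1 - t) * ((I%:R)^-1 * \sum_i fi i b).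
  rewrite mulrCA [X in _ <= _ + X]mulrCA -mulrDr; apply: ler_wpM2l; first by rewrite invr_ge0 ler0n.
  rewrite !mulr_sumr -big_split; apply: ler_sum => i _; exact: fi_convex.
have h2 : gsum R n J blk gj (t *: a + (1 - t) *: b)
   <= t * gsum R n J blk gj a + (1 - t) * gsum R n J blk gj b.
  rewrite /gsum !mulr_sumr -big_split; apply: ler_sum => j _.
  have -> : restr R n J blk (t *: a + (1 - t) *: b) j
     = (fun k => t * restr R n J blk a j k + (1 - t) * restr R n J blk b j k).
    by apply: funext => k; rewrite /restr !mxE.
  exact: gj_convex.
lra.
Qed.
End Helpers.
Unset Implicit Arguments. Set Strict Implicit.

Theorem theorem3 (R : realType) (n I J : nat) (blk : 'I_n -> 'I_J)
  (blk_surj : forall j : 'I_J, exists k : 'I_n, blk k = j)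
  (fi : 'I_I -> 'rV[R]_n -> R)
  (gj : forall j : 'I_J, bvec R n J blk j -> R)
  (fi_convex : forall i, @convex_fun R n (fi i))
  (fi_diff : forall i (x : 'rV[R]_n), differentiable (fi i) x)
  (gj_convex : forall j, @convex_bfun R n J blk j (gj j))
  (xstar : 'rV[R]_n)
  (xstar_min : forall y : 'rV[R]_n,
     (I%:R)^-1 * \sum_i fi i xstar + @gsum R n J blk gj xstar
       <= (I%:R)^-1 * \sum_i fi i y + @gsum R n J blk gj y)
  (Lj : 'I_J -> R) (Lj_ge0 : forall j, 0 <= Lj j)
  (Lip : forall i j (x : 'rV[R]_n) (h : bvec R n J blk j),
     @bnorm2 R n J blk j (fun k => @bgrad R n J blk (fi i) (x + @ext R n J blk j h) j k
                      - @bgrad R n J blk (fi i) x j k)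
       <= Lj j * @bnorm2 R n J blk j h)
  (step : nat -> 'I_I -> 'I_J -> 'rV[R]_n -> 'rV[R]_n)
  (Hstep : forall t i j (x : 'rV[R]_n),
     @orbcd_step R n J blk (\big[Num.max/0]_j Lj j) gj (fi i) t j x (step t i j x))
  (Rf D : R) (Xset : set 'rV[R]_n)
  (iter_in_X : forall (c : nat -> 'I_I * 'I_J) t, Xset (@iterates R n J I step c t))
  (xstar_in_X : Xset xstar)
  (diamX : forall a b, Xset a -> Xset b -> @norm2 R n (a - b) <= D)
  (grad_bnd : forall (c : nat -> 'I_I * 'I_J) t i,
     @norm2 R n (@grad R n (fi i) (@iterates R n J I step c t)) <= Rf)
  (d0 : 'I_I * 'I_J) (T : nat) (T_gt0 : (0 < T)%N) (x : 'rV[R]_n) :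
  let f := fun y => (I%:R)^-1 * \sum_i fi i y in
  let g := @gsum R n J blk gj in
  let L := \big[Num.max/0]_j Lj j in
  @Exp R _ d0 T (fun c => f (@xbar R n J I step c T) + g (@xbar R n J I step c T)) - (f x + g x)
    <= J%:R * ((Num.sqrt T%:R + L) / 2 * D ^+ 2 + Num.sqrt T%:R * Rf ^+ 2
               + g (@iterates R n J I step (fun _ => d0) 0) (* = g(x^1) = g(0) *) - g xstar) / T%:R.
Proof.
cbv zeta.
set f := (fun y : 'rV[R]_n => (I%:R)^-1 * \sum_i fi i y).
set g := gsum R n J blk gj.
set L := \big[Num.max/0]_j Lj j.
have I0 : (0 < I)%N by case: d0 => [[i hi] _]; exact: leq_ltn_trans (leq0n i) hi.
have J0 : (0 < J)%N by case: d0 => [_ [j hj]]; exact: leq_ltn_trans (leq0n j) hj.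
have L0 : 0 <= L.
  rewrite /L; apply: (big_ind (fun x => 0 <= x)) => //.
  by move=> a b ha hb; rewrite le_max ha.
have Rf0 : 0 <= Rf := le_trans (norm2_ge0 _) (grad_bnd (fun _ => d0) 0%N d0.1).
have D0 : 0 <= D := le_trans (norm2_ge0 _) (diamX xstar xstar xstar_in_X xstar_in_X).
pose e := fun t : nat => Defs.eta R L t.
have e_sqrt : forall t, Num.sqrt (t%:R) <= e t by move=> t; rewrite /e /Defs.eta; lra.
have e_pos : forall t, (0 < t)%N -> 0 < e t.
  move=> t t0; apply: (lt_le_trans _ (e_sqrt t)); by rewrite sqrtr_gt0 ltr0n.
have e_ge0 : forall t, 0 <= e t.
  move=> t; apply: le_trans (e_sqrt t); exact: sqrtr_ge0.
have e_mono : forall t, e t <= e t.+1.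
  by move=> t; rewrite /e /Defs.eta lerD2r ler_sqrt ?ler0n // ler_nat.
pose X := fun (c : nat -> 'I_I * 'I_J) (k : nat) => iterates R n J I step c k.
pose Fst := f xstar + g xstar.
pose Phi := fun (c : nat -> 'I_I * 'I_J) (t : nat) =>
  (J%:R)^-1 * (f (X c t) + g (X c t) - Fst) + g (X c t.+1) - g (X c t)
  - e t.+1 / 2 * (nrm2 (xstar - X c t) - nrm2 (xstar - X c t.+1)) - Rf ^+ 2 / (2 * e t.+1).
pose Cst := (Num.sqrt T%:R + L) / 2 * D ^+ 2 + Num.sqrt T%:R * Rf ^+ 2
               + g (iterates R n J I step (fun _ => d0) 0) - g xstar.
have Fmin : Fst <= f x + g x := xstar_min x.
have PW : forall c, f (xbar R n J I step c T) + g (xbar R n J I step c T) - (f x + g x)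
    <= J%:R * (\sum_(t < T) Phi c t + Cst) / T%:R.
  move=> c.
  have Jen : f (xbar R n J I step c T) + g (xbar R n J I step c T)
      <= (T%:R)^-1 * \sum_(k < T) (f (X c k) + g (X c k))
    := jensen (convexF fi_convex gj_convex) (X c) T_gt0.
  have E1 : \sum_(t < T) Phi c t
     = \sum_(t < T) ((J%:R)^-1 * (f (X c t) + g (X c t) - Fst))
       + \sum_(t < T) (g (X c t.+1) - g (X c t))
       - \sum_(t < T) (e t.+1 / 2 * (nrm2 (xstar - X c t) - nrm2 (xstar - X c t.+1)))
       - \sum_(t < T) (Rf ^+ 2 / (2 * e t.+1)).
    rewrite -big_split -!sumrB; apply: eq_bigr => i _; rewrite /Phi /=; ring.
  have E2 : \sum_(t < T) ((J%:R)^-1 * (f (X c t) + g (X c t) - Fst))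
     = (J%:R)^-1 * (\sum_(t < T) (f (X c t) + g (X c t)) - T%:R * Fst).
    by rewrite -mulr_sumr sumrB sumr_const card_ord mulr_natl.
  have E3 : \sum_(t < T) (g (X c t.+1) - g (X c t)) = g (X c T) - g (X c 0%N).
    by rewrite -(big_mkord xpredT (fun t => g (X c t.+1) - g (X c t))) telescope_sumr.
  have TI : \sum_(t < T) (e t.+1 / 2 * (nrm2 (xstar - X c t) - nrm2 (xstar - X c t.+1)))
      <= e T / 2 * D ^+ 2 - e T / 2 * nrm2 (xstar - X c T).
    apply: (tele_ineq (e := fun t => e t / 2) (d := fun t => nrm2 (xstar - X c t))) => //.
    - by move=> t /=; apply: divr_ge0.
    - by move=> t /=; rewrite ler_pM2r.
    - by move=> t; apply: sq_le_of_norm; apply: diamX => //; exact: iter_in_X.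
  have eT0 : 0 < e T := e_pos T T_gt0.
  have Kb : - (Rf ^+ 2 / (2 * e T) + e T / 2 * nrm2 (xstar - X c T)) <= f xstar - f (X c T).
    set K := Rf ^+ 2 / (2 * e T) + e T / 2 * nrm2 (xstar - X c T).
    have Hi : forall i, - K <= fi i xstar - fi i (X c T).
      move=> i; have h1 := first_order xstar (fi_convex i) (fi_diff i (X c T)).
      have h2 := dot_lb (grad R n (fi i) (X c T)) (xstar - X c T) eT0.
      have h3 : nrm2 (grad R n (fi i) (X c T)) / (2 * e T) <= Rf ^+ 2 / (2 * e T).
        rewrite ler_pM2r ?invr_gt0 ?mulr_gt0 //; apply: sq_le_of_norm; exact: grad_bnd.
      rewrite /K; lra.
    have HI : - (I%:R * K) <= \sum_i (fi i xstar - fi i (X c T)).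
      apply: (@le_trans _ _ (\sum_(i < I) (- K))).
        rewrite sumr_const card_ord -mulr_natl; lra.
      by apply: ler_sum => i _; exact: Hi.
    have Ipos : 0 < (I%:R : R) by rewrite ltr0n.
    have -> : f xstar - f (X c T) = (I%:R)^-1 * \sum_i (fi i xstar - fi i (X c T)).
      by rewrite /f sumrB mulrBr.
    rewrite -(ler_pM2l Ipos) mulrA divff ?mul1r; last by rewrite gt_eqF.
    lra.
  have Fm2 : Fst <= f (X c T) + g (X c T) := xstar_min (X c T).
  have RS : \sum_(t < T) (Rf ^+ 2 / (2 * e t.+1)) + Rf ^+ 2 / (2 * e T) <= Num.sqrt T%:R * Rf ^+ 2.
    have SS := sqrt_sum R T_gt0.
    apply: (@le_trans _ _ (Rf ^+ 2 * (\sum_(t < T) (2 * Num.sqrt (t.+1%:R : R))^-1 + (2 * Num.sqrt (T%:R : R))^-1))); last first.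
      by rewrite mulrC; apply: ler_wpM2r => //; exact: sqr_ge0.
    rewrite [Rf ^+ 2 * (_ + _)]mulrDr mulr_sumr; apply: lerD.
      apply: ler_sum => t _; apply: ler_wpM2l; first exact: sqr_ge0.
      have s0 : 0 < Num.sqrt (t.+1%:R : R) by rewrite sqrtr_gt0 ltr0n.
      rewrite lef_pV2 ?posrE ?mulr_gt0 ?e_pos // ler_pM2l //; exact: e_sqrt.
    apply: ler_wpM2l; first exact: sqr_ge0.
    have s0 : 0 < Num.sqrt (T%:R : R) by rewrite sqrtr_gt0 ltr0n.
    rewrite lef_pV2 ?posrE ?mulr_gt0 ?e_pos // ler_pM2l //; exact: e_sqrt.
  set SF := \sum_(k < T) (f (X c k) + g (X c k)).
  have G0 : g (X c 0%N) = g (iterates R n J I step (fun _ => d0) 0) by [].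
  have eTe : Num.sqrt T%:R + L = e T by [].
  have HZ : (J%:R)^-1 * (SF - T%:R * Fst) <= \sum_(t < T) Phi c t + Cst.
    rewrite E1 E2 E3 /Cst eTe -G0 -/SF.
    have FE : Fst = f xstar + g xstar by [].
    lra.
  have Jp : 0 < (J%:R : R) by rewrite ltr0n.
  have Tp : 0 < (T%:R : R) by rewrite ltr0n.
  have H2 : (SF - T%:R * Fst) / T%:R <= J%:R * (\sum_(t < T) Phi c t + Cst) / T%:R.
    rewrite ler_pM2r ?invr_gt0 //.
    have := ler_wpM2l (ltW Jp) HZ; rewrite mulrA divff ?mul1r //; by rewrite gt_eqF.
  have H3 : (SF - T%:R * Fst) / T%:R = (T%:R)^-1 * SF - Fst.
    by field; rewrite gt_eqF.
  rewrite H3 in H2.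
  have Jen' : f (xbar R n J I step c T) + g (xbar R n J I step c T) <= (T%:R)^-1 * SF := Jen.
  have Fx : Fst <= f x + g x := Fmin.
  lra.
have Apos : 0 < (#|{: 'I_I * 'I_J}|%:R : R).
  by rewrite ltr0n; apply/card_gt0P; exists d0.
have KS : forall t : 'I_T, \sum_(s : T.-tuple ('I_I * 'I_J)) Phi (fun k => nth d0 s k) t <= 0.
  move=> t.
  rewrite -(pmulr_rle0 _ Apos) (@avg_tuple R _ T t (fun s => Phi (fun k => nth d0 s k) t)).
  apply: sumr_le0 => s _.
  pose c := fun k => nth d0 s k.
  have Eq : forall a, Phi (fun k => nth d0 (upd s t a) k) t =
     (J%:R)^-1 * (f (X c t) + g (X c t) - (f xstar + g xstar))
     + g (step t.+1 a.1 a.2 (X c t)) - g (X c t)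
     - e t.+1 / 2 * (nrm2 (xstar - X c t) - nrm2 (xstar - step t.+1 a.1 a.2 (X c t)))
     - Rf ^+ 2 / (2 * e t.+1).
    move=> a.
    have HX : X (fun k => nth d0 (upd s t a) k) t = X c t.
      rewrite /X; apply: (@iter_agree R n J I step _ _ (val t)); last by [].
      by move=> k hk; rewrite nth_upd (ltn_eqF hk).
    have HX1 : X (fun k => nth d0 (upd s t a) k) t.+1 = step t.+1 a.1 a.2 (X c t).
      rewrite /X /= -/(X _ t) HX nth_upd eqxx //.
    by rewrite /Phi HX HX1.
  rewrite (eq_bigr _ (fun a _ => Eq a)).
  exact: (@per_step R n I J blk fi gj fi_convex fi_diff gj_convex xstar (X c t) Rf L t.+1
            (e_pos t.+1 isT) I0 J0 (fun i => grad_bnd c t i)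
            (fun i j => step t.+1 i j (X c t)) (fun i j => Hstep t.+1 i j (X c t))
            f erefl g erefl (e t.+1) erefl).
rewrite /Exp.
set N := ((#|{: 'I_I * 'I_J}|%:R : R) ^+ T).
have Np : 0 < N by rewrite exprn_gt0.
have Tp : 0 < (T%:R : R) by rewrite ltr0n.
have Hsum : \sum_(s : T.-tuple ('I_I * 'I_J)) (f (xbar R n J I step (fun k => nth d0 s k) T)
                + g (xbar R n J I step (fun k => nth d0 s k) T))
   <= \sum_(s : T.-tuple ('I_I * 'I_J)) (f x + g x + J%:R * Cst / T%:R)
      + J%:R / T%:R * \sum_(s : T.-tuple ('I_I * 'I_J)) \sum_(t < T) Phi (fun k => nth d0 s k) t.
  rewrite mulr_sumr -big_split; apply: ler_sum => s _.
  have := PW (fun k => nth d0 s k).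
  have -> : J%:R * (\sum_(t < T) Phi (fun k => nth d0 s k) t + Cst) / T%:R
     = J%:R / T%:R * \sum_(t < T) Phi (fun k => nth d0 s k) t + J%:R * Cst / T%:R by ring.
  move=> h /=; lra.
have Hneg : J%:R / T%:R * \sum_(s : T.-tuple ('I_I * 'I_J)) \sum_(t < T) Phi (fun k => nth d0 s k) t <= 0.
  apply: mulr_ge0_le0; first by apply: divr_ge0; rewrite ler0n.
  rewrite exchange_big /=; apply: sumr_le0 => t _; exact: KS.
have Hc : \sum_(s : T.-tuple ('I_I * 'I_J)) (f x + g x + J%:R * Cst / T%:R) = N * (f x + g x + J%:R * Cst / T%:R).
  by rewrite sumr_const card_tuple -[_ *+ (_ ^ T)]mulr_natl natrX.
have Final : N^-1 * \sum_(s : T.-tuple ('I_I * 'I_J)) (f (xbar R n J I step (fun k => nth d0 s k) T)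
                + g (xbar R n J I step (fun k => nth d0 s k) T)) <= f x + g x + J%:R * Cst / T%:R.
  rewrite ler_pdivrMl //; lra.
move: Final; rewrite /Cst.
lra.
Qed.
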